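(* Let $N,d\in\mathbb{N}^*$, $\alpha>0$, and for $i\neq j$ let $\Psi_{ij}:\mathbb{R}^{2dN}\to\mathbb{R}_+$ be non-negative, bounded and locally Lipschitz. Let $(x_i,v_i)_i$ be a solution on $\mathbb{R}_+$ of $\frac{dx_i}{dt}=v_i$, $\frac{dv_i}{dt}=\alpha\sum_jQ_t(i,j)(v_j-v_i)$, where $Q_t(i,j)=\Psi_{ij}((x_k(t),v_k(t))_k)$ for $i\ne j$ and $Q_t(i,i)=-\sum_{j\ne i}Q_t(i,j)$, and let $(P^*_{s,t})_{0\le s\le t}$ be the solution on $\mathbb{R}_+$ of $P^*_{t,t}=I$, $\partial_tP^*_{s,t}=\alpha Q_tP^*_{s,t}$, $\partial_sP^*_{s,t}=-\alpha P^*_{s,t}Q_s$. Suppose there exists $C:\mathbb{R}_+^2\to\mathbb{R}_+$ such that (a) for all $t\ge0$, $r\mapsto C(t,r)$ is increasing; (b) for all $r\ge X(0)$, $C(t,r)\to0$ as $t\to+\infty$; (c) for all $t\ge0$, $1-\mu(P^*_{0,t})\le C(t,\sup_{s\le t}X(s))$. If there exists $r_0\ge X(0)$ with $$r_0-X(0)>V(0)\int_0^{+\infty}C(s,r_0)\,ds,$$ then the solution flocks: $\sup_{t\ge0}X(t)<+\infty$ and $V(t)\to0$ as $t\to+\infty$.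
   Context: $X(t)=\sup_{i,j}\|x_i(t)-x_j(t)\|_2$, $V(t)=\sup_{i,j}\|v_i(t)-v_j(t)\|_2$. The Dobrushin ergodicity coefficient of a stochastic matrix $P$ is $\mu(P)=\inf_{i,j}\sum_kP(i,k)\wedge P(j,k)$, with $a\wedge b=\min(a,b)$. *)

(* Defs.v *)
From HB Require Import structures.
From mathcomp Require Import all_boot all_order all_algebra.
From mathcomp Require Import all_classical all_reals all_analysis.
Set Implicit Arguments. Unset Strict Implicit. Unset Printing Implicit Defensive.
Import Order.TTheory GRing.Theory Num.Theory.
Import numFieldNormedType.Exports.
Local Open Scope ring_scope.
Local Open Scope classical_set_scope.

Definition enorm (R : realType) (d : nat) (u : 'rV[R]_d) : R :=
  Num.sqrt (\sum_(k < d) u 0 k ^+ 2).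

(* Given positions (x_i)_i stored as the rows of an N x d matrix,
   diam x = sup_{i,j} ||x_i - x_j||_2 (used for both X(t) and V(t)). *)
Definition diam (R : realType) (N d : nat) (x : 'M[R]_(N, d)) : R :=
  sup [set enorm (row i x - row j x) | i in [set: 'I_N] & j in [set: 'I_N]].

Definition dobrushin (R : realType) (N : nat) (P : 'M[R]_N) : R :=
  inf [set \sum_(k < N) Num.min (P i k) (P j k) | i in [set: 'I_N] & j in [set: 'I_N]].

Definition Qmat (R : realType) (N d : nat)
  (Psi : 'I_N -> 'I_N -> 'M[R]_(N, d) -> 'M[R]_(N, d) -> R)
  (x v : 'M[R]_(N, d)) : 'M[R]_N :=
  \matrix_(i, j) (if i == j then - \sum_(k < N | k != i) Psi i k x v
                  else Psi i j x v).

Definition align_force (R : realType) (N d : nat) (alpha : R)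
  (Q : 'M[R]_N) (v : 'M[R]_(N, d)) : 'M[R]_(N, d) :=
  \matrix_(i, k) (alpha * \sum_(j < N) Q i j * (v j k - v i k)).

(* Local Lipschitz continuity of a function of the configuration (x,v) in R^{2dN}
   (norm: |x| + |v|, any norm being equivalent). *)
Definition locally_lipschitz2 (R : realType) (N d : nat)
  (f : 'M[R]_(N, d) -> 'M[R]_(N, d) -> R) : Prop :=
  forall x0 v0 : 'M[R]_(N, d), exists r : R, 0 < r /\ exists L : R,
    forall x1 v1 x2 v2 : 'M[R]_(N, d),
      `|x1 - x0| < r -> `|v1 - v0| < r -> `|x2 - x0| < r -> `|v2 - v0| < r ->
      `|f x1 v1 - f x2 v2| <= L * (`|x1 - x2| + `|v1 - v2|).

(* Main.v *)
Require Import Defs.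
From HB Require Import structures.
From mathcomp Require Import all_boot all_order all_algebra.
From mathcomp Require Import all_classical all_reals all_analysis.
From mathcomp Require Import ring lra.
Set Implicit Arguments. Unset Strict Implicit.
Import Order.TTheory GRing.Theory Num.Theory.
Import numFieldNormedType.Exports.
Local Open Scope ring_scope.
Local Open Scope classical_set_scope.
Definition dotv (R : realType) (d : nat) (u e : 'rV[R]_d) : R :=
  \sum_(k < d) u 0 k * e 0 k.

Lemma enorm_ge0 (R : realType) d (u : 'rV[R]_d) : 0 <= enorm u.
Proof. by rewrite /enorm sqrtr_ge0. Qed.

Lemma enorm_sq (R : realType) d (u : 'rV[R]_d) :
  enorm u ^+ 2 = \sum_(k < d) u 0 k ^+ 2.
Proof. by rewrite /enorm sqr_sqrtr // sumr_ge0 // => k _; exact: sqr_ge0. Qed.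

Lemma enorm0P (R : realType) d (u : 'rV[R]_d) : enorm u = 0 -> forall k, u 0 k = 0.
Proof.
move=> h k; have := enorm_sq u; rewrite h expr0n /= => /esym.
move/psumr_eq0P => /(_ (fun i _ => sqr_ge0 (u 0 i)) k isT).
by move/eqP; rewrite sqrf_eq0 => /eqP.
Qed.

Lemma CS (R : realType) d (u e : 'rV[R]_d) : dotv u e <= enorm u * enorm e.
Proof.
set A := enorm u; set E := enorm e.
have key : 0 <= \sum_(k < d) (E * u 0 k - A * e 0 k) ^+ 2.
  by apply: sumr_ge0 => k _; exact: sqr_ge0.
have expand : \sum_(k < d) (E * u 0 k - A * e 0 k) ^+ 2 =
   E ^+ 2 * A ^+ 2 - 2 * E * A * dotv u e + A ^+ 2 * E ^+ 2.
  rewrite (eq_bigr (fun k => E ^+ 2 * u 0 k ^+ 2 - (2 * E * A) * (u 0 k * e 0 k)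
     + A ^+ 2 * e 0 k ^+ 2)); last by move=> k _; ring.
  rewrite big_split /= sumrB -!mulr_sumr -!enorm_sq.
  by rewrite /dotv.
have A0 : 0 <= A by exact: enorm_ge0.
have E0 : 0 <= E by exact: enorm_ge0.
have [Az|Anz] := eqVneq A 0.
  rewrite /dotv Az mul0r big1 // => k _.
  by rewrite (enorm0P Az) mul0r.
have [Ez|Enz] := eqVneq E 0.
  rewrite /dotv Ez mulr0 big1 // => k _.
  by rewrite (enorm0P Ez) mulr0.
have Ap : 0 < A by rewrite lt_def Anz.
have Ep : 0 < E by rewrite lt_def Enz.
rewrite expand in key.
have EAp : 0 < E * A by exact: mulr_gt0.
nra.
Qed.

Lemma enorm_dir (R : realType) d (u : 'rV[R]_d) :
  exists e : 'rV[R]_d, enorm e <= 1 /\ dotv u e = enorm u.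
Proof.
have [Az|Anz] := eqVneq (enorm u) 0.
  exists 0; rewrite Az; split.
    rewrite /enorm big1 ?sqrtr0 // => k _; by rewrite mxE expr0n.
  by rewrite /dotv big1 // => k _; rewrite mxE mulr0.
have Ap : 0 < enorm u by rewrite lt_def Anz enorm_ge0.
exists ((enorm u)^-1 *: u); split.
  rewrite /enorm (eq_bigr (fun k => (enorm u)^-2 * u 0 k ^+ 2)); last first.
    by move=> k _; rewrite mxE exprMn exprVn.
  rewrite -mulr_sumr -enorm_sq mulVf ?sqrtr1 //.
  by rewrite expf_neq0.
rewrite /dotv (eq_bigr (fun k => (enorm u)^-1 * u 0 k ^+ 2)); last first.
  by move=> k _; rewrite mxE; ring.
by rewrite -mulr_sumr -enorm_sq expr2 mulrA mulVf ?mul1r.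
Qed.

Lemma diam_ub (R : realType) N d (x : 'M[R]_(N, d)) i j :
  enorm (row i x - row j x) <= diam x.
Proof.
apply: sup_upper_bound; last by exists i => //; exists j.
split; first by exists (enorm (row i x - row j x)); exists i => //; exists j.
exists (\big[Num.max/0]_(p : 'I_N * 'I_N) enorm (row p.1 x - row p.2 x)).
move=> z [a _ [b _ <-]].
exact: (le_bigmax 0 (fun p : 'I_N * 'I_N => enorm (row p.1 x - row p.2 x)) (a, b)).
Qed.

Lemma diam_le (R : realType) N d (x : 'M[R]_(N, d)) c : (0 < N)%N ->
  (forall i j, enorm (row i x - row j x) <= c) -> diam x <= c.
Proof.
move=> hN h; apply: ge_sup.
  by exists (enorm (row (Ordinal hN) x - row (Ordinal hN) x));
     exists (Ordinal hN) => //; exists (Ordinal hN).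
by move=> z [a _ [b _ <-]]; exact: h.
Qed.

Lemma diam_ge0 (R : realType) N d (x : 'M[R]_(N, d)) : (0 < N)%N -> 0 <= diam x.
Proof.
move=> hN; apply: le_trans (diam_ub x (Ordinal hN) (Ordinal hN)).
exact: enorm_ge0.
Qed.

Lemma dob_lb (R : realType) N (P : 'M[R]_N) i j :
  dobrushin P <= \sum_(k < N) Num.min (P i k) (P j k).
Proof.
apply: ge_inf; last by exists i => //; exists j.
exists (\sum_(k < N) - \big[Num.max/0]_(l < N) `|P l k|).
move=> z [a _ [b _ <-]]; apply: ler_sum => k _.
rewrite le_min; apply/andP; split.
  have := le_bigmax 0 (fun l => `|P l k|) a; have := ler_norm (- P a k).
  rewrite normrN /=; lra.
have := le_bigmax 0 (fun l => `|P l k|) b; have := ler_norm (- P b k).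
rewrite normrN /=; lra.
Qed.

Lemma dotvB (R : realType) d (u w e : 'rV[R]_d) :
  dotv (u - w) e = dotv u e - dotv w e.
Proof.
rewrite /dotv -sumrB; apply: eq_bigr => k _; rewrite !mxE; ring.
Qed.

Lemma vel_bound (R : realType) N d (Pm : 'M[R]_N) (w0 : 'M[R]_(N, d)) c0 i j :
  (forall l, \sum_(k < N) Pm l k = 1) ->
  (forall k l, enorm (row k w0 - row l w0) <= c0) ->
  enorm (row i (Pm *m w0) - row j (Pm *m w0)) <=
    (1 - \sum_(k < N) Num.min (Pm i k) (Pm j k)) * c0.
Proof.
move=> hrow hc0.
have [e [e1 de]] := enorm_dir (row i (Pm *m w0) - row j (Pm *m w0)).
rewrite -de.
pose y k := dotv (row k w0) e.
have c0ge0 : 0 <= c0 by apply: le_trans (hc0 i i); exact: enorm_ge0.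
have -> : dotv (row i (Pm *m w0) - row j (Pm *m w0)) e =
    \sum_(k < N) (Pm i k - Pm j k) * y k.
  rewrite /y /dotv.
  rewrite (eq_bigr (fun m => \sum_(k < N) (Pm i k - Pm j k) * (w0 k m * e 0 m)));
    last first.
    move=> m _; rewrite !mxE -sumrB mulr_suml; apply: eq_bigr => k _.
    by rewrite ?mxE; ring.
  rewrite exchange_big /=; apply: eq_bigr => k _.
  rewrite mulr_sumr; apply: eq_bigr => m _; by rewrite !mxE.
pose mk k := Num.min (Pm i k) (Pm j k).
pose a k := Pm i k - mk k.
pose b k := Pm j k - mk k.
have a0 : forall k, 0 <= a k.
  by move=> k; rewrite /a subr_ge0 /mk ge_min lexx.
have b0 : forall k, 0 <= b k.
  by move=> k; rewrite /b subr_ge0 /mk ge_min lexx orbT.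
set c := 1 - _.
have sa : \sum_(k < N) a k = c by rewrite /a sumrB hrow.
have sb : \sum_(k < N) b k = c by rewrite /b sumrB hrow.
have -> : \sum_(k < N) (Pm i k - Pm j k) * y k =
    \sum_(k < N) a k * y k - \sum_(k < N) b k * y k.
  by rewrite -sumrB; apply: eq_bigr => k _; rewrite /a /b; ring.
have yb : forall k l, y k - y l <= c0.
  move=> k l; rewrite /y -dotvB; apply: le_trans (CS _ _) _.
  apply: le_trans (hc0 k l).
  by rewrite -{2}(mulr1 (enorm _)) ler_wpM2l // enorm_ge0.
have key : c * (\sum_(k < N) a k * y k - \sum_(k < N) b k * y k) =
    \sum_(k < N) \sum_(l < N) a k * b l * (y k - y l).
  rewrite mulrBr.
  rewrite -{1}sb -{1}sa mulr_suml mulr_suml.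
  rewrite [X in X - _](eq_bigr (fun l => \sum_(k < N) a k * b l * y k)); last first.
    by move=> l _; rewrite mulr_sumr; apply: eq_bigr => k _; ring.
  rewrite [X in _ - X](eq_bigr (fun k => \sum_(l < N) a k * b l * y l)); last first.
    by move=> k _; rewrite mulr_sumr; apply: eq_bigr => l _; ring.
  rewrite exchange_big /= -sumrB; apply: eq_bigr => k _.
  by rewrite -sumrB; apply: eq_bigr => l _; ring.
have key2 : \sum_(k < N) \sum_(l < N) a k * b l * (y k - y l) <= c * (c * c0).
  have -> : c * (c * c0) = \sum_(k < N) \sum_(l < N) a k * b l * c0.
    rewrite -{1}sa mulr_suml; apply: eq_bigr => k _.
    rewrite -sb mulr_suml mulr_sumr; apply: eq_bigr => l _; ring.
  apply: ler_sum => k _; apply: ler_sum => l _.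
  by apply: ler_wpM2l; [exact: mulr_ge0 | exact: yb].
have c0' : 0 <= c by rewrite -sa sumr_ge0.
have [cz|cnz] := eqVneq c 0.
  have az : forall k, a k = 0.
    move=> k; have h : \sum_(k < N) a k = 0 by rewrite sa.
    exact: (psumr_eq0P (fun k _ => a0 k) h).
  have bz : forall k, b k = 0.
    move=> k; have h : \sum_(k < N) b k = 0 by rewrite sb.
    exact: (psumr_eq0P (fun k _ => b0 k) h).
  rewrite cz mul0r !big1 ?subr0 // => k _; by rewrite ?az ?bz mul0r.
have cp : 0 < c by rewrite lt_def cnz.
rewrite -(ler_pM2l cp) key; exact: key2.
Qed.

Lemma is_derive_entry (R : realType) m n (u : R -> 'M[R]_(m, n)) (t : R) (du : 'M[R]_(m, n)) (i : 'I_m) (k : 'I_n) :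
  is_derive t 1 u du -> is_derive t 1 (fun s => u s i k) (du i k).
Proof.
move=> [dv dval]; split; first exact: (derivable_mxP u t 1).1 dv i k.
by rewrite -dval derive_mx // mxE.
Qed.

Lemma is_derive_sumf (R : realType) n (h : 'I_n -> R -> R) (x : R) dh :
  (forall i, is_derive x 1 (h i) (dh i)) ->
  is_derive x 1 (fun y => \sum_(i < n) h i y) (\sum_(i < n) dh i).
Proof. by move=> H; rewrite -fct_sumE; exact: is_derive_sum. Qed.

Lemma is_derive_mulf (R : realType) (f g : R -> R) (x df dg : R) :
  is_derive x 1 f df -> is_derive x 1 g dg ->
  is_derive x 1 (fun y => f y * g y) (f x * dg + g x * df).
Proof. by move=> H1 H2; have := is_deriveM H1 H2. Qed.

Lemma is_derive_expRlin (R : realType) (L x : R) :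
  is_derive x 1 (fun y => expR (L * y)) (expR (L * x) * L).
Proof.
have H : is_derive x 1 (fun y : R => L * y) L.
  have := is_deriveZ L (is_derive_id x (1 : R)).
  by rewrite [X in is_derive _ _ _ X]/GRing.scale /= mulr1.
exact: (is_derive1_comp (is_derive_expR (L * x)) H).
Qed.

Lemma ode_unique (R : realType) N m (u : R -> 'I_N -> 'I_m -> R)
  (A : R -> 'I_N -> 'I_N -> R) (K : R) :
  (forall (t : R) i l, `|A t i l| <= K) ->
  (forall i k, u s i k @[s --> 0^'+] --> 0) ->
  (forall t : R, 0 < t -> forall i k,
     is_derive t 1 (fun s => u s i k) (\sum_(l < N) A t i l * u t l k)) ->
  forall t : R, 0 < t -> forall i k, u t i k = 0.
Proof.
move=> hA hu0 hder t tp i0 k0.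
have K0 : 0 <= K by apply: le_trans (hA t i0 i0); exact: normr_ge0.
pose phi (s : R) := \sum_(i < N) \sum_(k < m) u s i k * u s i k.
pose dphi (s : R) := \sum_(i < N) \sum_(k < m)
   (u s i k * (\sum_(l < N) A s i l * u s l k) +
    u s i k * (\sum_(l < N) A s i l * u s l k)).
have phi_der : forall s : R, 0 < s -> is_derive s 1 phi (dphi s).
  move=> s sp; apply: is_derive_sumf => i; apply: is_derive_sumf => k.
  exact: is_derive_mulf (hder s sp i k) (hder s sp i k).
have phi_ge0 : forall s : R, 0 <= phi s.
  by move=> s; apply: sumr_ge0 => i _; apply: sumr_ge0 => k _;
     rewrite -expr2 sqr_ge0.
pose L := 2 * K * N%:R.
have dphi_le : forall s : R, dphi s <= L * phi s.
  move=> s.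
  have e1 : dphi s = \sum_(i < N) \sum_(k < m) \sum_(l < N)
      2 * A s i l * u s i k * u s l k.
    rewrite /dphi /=; apply: eq_bigr => i _.
    apply: eq_bigr => k _.
    rewrite -mulr2n mulr_sumr -sumrMnl; apply: eq_bigr => l _.
    rewrite -mulr_natl; ring.
  have e2 : forall i k l, 2 * A s i l * u s i k * u s l k <=
      K * (u s i k * u s i k) + K * (u s l k * u s l k).
    move=> i k l; move: (hA s i l); rewrite ler_norml => /andP [h1 h2].
    have H1 : 0 <= (K - A s i l) * ((u s i k + u s l k) ^+ 2).
      by apply: mulr_ge0; [lra | exact: sqr_ge0].
    have H2 : 0 <= (K + A s i l) * ((u s i k - u s l k) ^+ 2).
      by apply: mulr_ge0; [lra | exact: sqr_ge0].
    nra.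
  have e3 : \sum_(i < N) \sum_(k < m) \sum_(l < N)
      (K * (u s i k * u s i k) + K * (u s l k * u s l k)) = L * phi s.
    rewrite (eq_bigr (fun i => (\sum_(k < m) K * (u s i k * u s i k)) *+ N
        + K * phi s)); last first.
      move=> i _.
      rewrite (eq_bigr (fun k => K * (u s i k * u s i k) *+ N +
          \sum_(l < N) K * (u s l k * u s l k))); last first.
        by move=> k _; rewrite big_split /= sumr_const card_ord.
      rewrite big_split /= sumrMnl; congr (_ + _).
      rewrite exchange_big /= /phi mulr_sumr; apply: eq_bigr => l _.
      by rewrite mulr_sumr.
    rewrite big_split /= sumrMnl sumr_const card_ord.
    have Hs : \sum_(i < N) \sum_(k < m) K * (u s i k * u s i k) = K * phi s.
      by rewrite /phi mulr_sumr; apply: eq_bigr => i _; rewrite mulr_sumr.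
    rewrite Hs /L; ring.
  rewrite e1 -e3; apply: ler_sum => i _; apply: ler_sum => k _.
  by apply: ler_sum => l _; exact: e2.
pose psi (s : R) := expR (- L * s) * phi s.
have psi_der : forall s : R, 0 < s ->
    is_derive s 1 psi (expR (- L * s) * dphi s + phi s * (expR (- L * s) * - L)).
  by move=> s sp; exact: is_derive_mulf (is_derive_expRlin (- L) s) (phi_der s sp).
have psi_nincr : forall s : R, 0 < s -> s <= t -> psi t <= psi s.
  move=> s sp st.
  have H := @ler0_derive1_le_oo R psi 0 (t + 1).
  apply: H => //.
  - move=> x; rewrite in_itv /= => /andP [xp _].
    by have [] := psi_der x xp.
  - move=> x; rewrite in_itv /= => /andP [xp _].
    rewrite derive1E (@derive_val _ _ _ _ _ _ _ (psi_der x xp)).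
    have -> : expR (- L * x) * dphi x + phi x * (expR (- L * x) * - L) =
       expR (- L * x) * (dphi x - L * phi x) by ring.
    apply: mulr_ge0_le0; first exact: ltW (expR_gt0 _).
    by rewrite subr_le0.
  - move=> x xI; have /andP [xp _] : 0 < x < t + 1.
      by move: xI; rewrite ?inE /= ?in_itv.
    apply: differentiable_continuous; apply/derivable1_diffP.
    by have [] := psi_der x xp.
  - by rewrite in_itv /=; apply/andP; split; lra.
  - by rewrite in_itv /=; apply/andP; split; lra.
have phi0' : phi s @[s --> 0^'+] --> \sum_(i < N) \sum_(k < m) (0 : R) * 0.
  apply: (cvg_big (op := +%R) (x0 := 0) (P := xpredT) add_continuous) => // i _.
  apply: (cvg_big (op := +%R) (x0 := 0) (P := xpredT) add_continuous) => // k _.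
  apply: cvgM; exact: hu0.
have E0 : \sum_(i < N) \sum_(k < m) (0 : R) * 0 = 0.
  by rewrite big1 // => i _; rewrite big1 // mulr0.
have phi0 : phi s @[s --> 0^'+] --> 0 by move: phi0'; rewrite E0.
have psit0 : psi t <= 0.
  rewrite leNgt; apply/negP => pt.
  have H : \forall s \near 0^'+, phi s < psi t /\ 0 < s /\ s < t.
    near=> s; split; last split.
    - near: s; exact: (cvgr_lt _ phi0 _ pt).
    - near: s; exact: nbhs_right_gt.
    - near: s; exact: nbhs_right_lt.
  have [s /= [h1 [h2 h3]]] := @filter_ex R (0^'+) _ _ H.
  have := psi_nincr s h2 (ltW h3).
  have : psi s <= phi s.
    rewrite /psi -{2}(mul1r (phi s)); apply: ler_wpM2r => //.
    rewrite expR_le1 mulNr oppr_le0; apply: mulr_ge0 => //; last exact: ltW.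
    by rewrite /L; apply: mulr_ge0 => //; apply: mulr_ge0.
  lra.
have phit0 : phi t = 0.
  apply/eqP; rewrite eq_le phi_ge0 andbT.
  by move: psit0; rewrite /psi pmulr_rle0 // expR_gt0.
have h1 : \sum_(k < m) u t i0 k * u t i0 k = 0.
  apply: (psumr_eq0P _ phit0) => // i _.
  by apply: sumr_ge0 => k _; rewrite -expr2 sqr_ge0.
have h2 : u t i0 k0 * u t i0 k0 = 0.
  apply: (psumr_eq0P _ h1) => // k _.
  by rewrite -expr2 sqr_ge0.
by move/eqP: h2; rewrite mulf_eq0 orbb => /eqP.
Unshelve. all: by end_near.
Qed.

Lemma is_derive_subf (R : realType) (f g : R -> R) (x df dg : R) :
  is_derive x 1 f df -> is_derive x 1 g dg ->
  is_derive x 1 (fun y => f y - g y) (df - dg).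
Proof. by move=> H1 H2; have := is_deriveB H1 H2. Qed.

Lemma is_derive_mulc (R : realType) (f : R -> R) (x df c : R) :
  is_derive x 1 f df -> is_derive x 1 (fun y => f y * c) (df * c).
Proof.
move=> H; have := is_derive_mulf H (is_derive_cst c x 1).
by rewrite mulr0 add0r mulrC.
Qed.

Lemma is_derive_subc (R : realType) (f : R -> R) (x df c : R) :
  is_derive x 1 f df -> is_derive x 1 (fun y => f y - c) df.
Proof.
move=> H; have := is_derive_subf H (is_derive_cst c x 1).
by rewrite subr0.
Qed.

Lemma entry_cvg (R : realType) (T : Type) (F : set_system T) {FF : Filter F} m n
  (y : T -> 'M[R]_(m, n)) (Y : 'M[R]_(m, n)) i k :
  y s @[s --> F] --> Y -> y s i k @[s --> F] --> Y i k.
Proof. by move=> H; exact: (cvg_comp _ _ H (@coord_continuous R m n i k Y)). Qed.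

Definition lf (R : realType) N d (i j : 'I_N) (e : 'rV[R]_d) (M : 'M[R]_(N, d)) : R :=
  \sum_(k < d) (M i k - M j k) * e 0 k.

Lemma lfE (R : realType) N d (i j : 'I_N) (e : 'rV[R]_d) (M : 'M[R]_(N, d)) :
  lf i j e M = dotv (row i M - row j M) e.
Proof. by rewrite /lf /dotv; apply: eq_bigr => k _; rewrite !mxE. Qed.

Lemma lf_cvg (R : realType) (T : Type) (F : set_system T) {FF : Filter F} N d
  (i j : 'I_N) (e : 'rV[R]_d) (y : T -> 'M[R]_(N, d)) (Y : 'M[R]_(N, d)) :
  y s @[s --> F] --> Y -> lf i j e (y s) @[s --> F] --> lf i j e Y.
Proof.
move=> H; rewrite /lf.
apply: (cvg_big (op := +%R) (x0 := 0) (P := xpredT) add_continuous) => // k _.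
apply: cvgM; last exact: cvg_cst.
by apply: cvgB; exact: entry_cvg.
Qed.

Lemma lf_derive (R : realType) N d (i j : 'I_N) (e : 'rV[R]_d)
  (y : R -> 'M[R]_(N, d)) (t : R) (dy : 'M[R]_(N, d)) :
  is_derive t 1 y dy -> is_derive t 1 (fun s => lf i j e (y s)) (lf i j e dy).
Proof.
move=> H; rewrite /lf; apply: is_derive_sumf => k.
apply: is_derive_mulc; apply: is_derive_subf; exact: is_derive_entry.
Qed.

Lemma enormE (R : realType) N d (i j : 'I_N) (M : 'M[R]_(N, d)) :
  enorm (row i M - row j M) =
  Num.sqrt (\sum_(k < d) (M i k - M j k) * (M i k - M j k)).
Proof. by rewrite /enorm; congr Num.sqrt; apply: eq_bigr => k _; rewrite !mxE expr2. Qed.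

Lemma enorm_cvg (R : realType) (T : Type) (F : set_system T) {FF : Filter F} N d
  (i j : 'I_N) (y : T -> 'M[R]_(N, d)) (Y : 'M[R]_(N, d)) :
  y s @[s --> F] --> Y ->
  enorm (row i (y s) - row j (y s)) @[s --> F] --> enorm (row i Y - row j Y).
Proof.
move=> H.
have -> : (fun s => enorm (row i (y s) - row j (y s))) =
  (fun s => Num.sqrt (\sum_(k < d) (y s i k - y s j k) * (y s i k - y s j k))).
  by apply/funext => s; rewrite enormE.
rewrite enormE.
apply: (continuous_cvg _ (@sqrt_continuous R _)).
apply: (cvg_big (op := +%R) (x0 := 0) (P := xpredT) add_continuous) => // k _.
by apply: cvgM; apply: cvgB; exact: entry_cvg.
Qed.

Lemma derive_cont (R : realType) (V : normedModType R) (y : R -> V) (t : R) (dy : V) :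
  is_derive t 1 y dy -> y s @[s --> t] --> y t.
Proof.
move=> [H _]; apply: differentiable_continuous; exact/derivable1_diffP.
Qed.

Lemma le_sum_term (R : realType) (I : finType) (F : I -> R) j :
  (forall i, 0 <= F i) -> F j <= \sum_i F i.
Proof. by move=> h; rewrite (bigD1 j) //= lerDl sumr_ge0. Qed.

Lemma sum_filter_le (R : realType) (I : finType) (P : pred I) (F : I -> R) :
  (forall i, 0 <= F i) -> \sum_(i | P i) F i <= \sum_i F i.
Proof.
move=> h; rewrite big_mkcond /=; apply: ler_sum => i _.
by case: (P i).
Qed.

Lemma Q_rowsum (R : realType) N d
  (Psi : 'I_N -> 'I_N -> 'M[R]_(N, d) -> 'M[R]_(N, d) -> R) x v i :
  \sum_(l < N) Qmat Psi x v i l = 0.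
Proof.
rewrite (bigD1 i) //= !mxE eqxx.
rewrite (eq_bigr (fun l => Psi i l x v)); first by rewrite addNr.
by move=> l hl; rewrite !mxE eq_sym (negbTE hl).
Qed.

Lemma Q_bound (R : realType) N d
  (Psi : 'I_N -> 'I_N -> 'M[R]_(N, d) -> 'M[R]_(N, d) -> R) :
  (forall i j, i != j -> forall x v, 0 <= Psi i j x v) ->
  (forall i j, i != j -> exists M : R, forall x v, Psi i j x v <= M) ->
  exists K : R, forall x v i l, `|Qmat Psi x v i l| <= K.
Proof.
move=> hnn hbd.
have H : forall p : 'I_N * 'I_N, exists M : R,
    p.1 != p.2 -> forall x v, Psi p.1 p.2 x v <= M.
  move=> [i j] /=; have [hij|hij] := boolP (i != j).
    by have [M hM] := hbd i j hij; exists M => _.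
  by exists 0.
have [Mf hMf] := choice H.
pose Mb := \sum_(p : 'I_N * 'I_N) `|Mf p|.
have Mb0 : 0 <= Mb by apply: sumr_ge0 => p _; exact: normr_ge0.
have Psi_le : forall i j, i != j -> forall x v, Psi i j x v <= Mb.
  move=> i j hij x v; apply: le_trans (hMf (i, j) hij x v) _.
  apply: le_trans (ler_norm _) _.
  rewrite /Mb (bigD1 (i, j)) //= lerDl; apply: sumr_ge0 => p _; exact: normr_ge0.
exists (Mb *+ N + Mb) => x v i l; rewrite !mxE.
have [eil|hil] := eqVneq i l.
  rewrite normrN ger0_norm; last by apply: sumr_ge0 => k hk; apply: hnn; rewrite eq_sym.
  apply: le_trans (_ : \sum_(k | k != i) Mb <= _).
    by apply: ler_sum => k hk; apply: Psi_le; rewrite eq_sym.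
  apply: le_trans (sum_filter_le _ (fun _ => Mb0)) _.
  by rewrite sumr_const card_ord lerDl.
rewrite ger0_norm; last exact: hnn.
apply: le_trans (Psi_le i l hil x v) _.
by rewrite lerDr mulrn_wge0.
Qed.

Lemma align_eq (R : realType) N d
  (Psi : 'I_N -> 'I_N -> 'M[R]_(N, d) -> 'M[R]_(N, d) -> R) alpha x v
  (w : 'M[R]_(N, d)) i k :
  align_force alpha (Qmat Psi x v) w i k =
  alpha * \sum_(j < N) Qmat Psi x v i j * w j k.
Proof.
rewrite !mxE; congr (_ * _).
rewrite (eq_bigr (fun j => Qmat Psi x v i j * w j k - Qmat Psi x v i j * w i k));
  last by move=> j _; rewrite mulrBr.
by rewrite sumrB -mulr_suml Q_rowsum mul0r subr0.
Qed.

Lemma sum_row1 (R : realType) N (i : 'I_N) : \sum_(l < N) (1%:M : 'M[R]_N) i l = 1.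
Proof.
rewrite (bigD1 i) //= big1 ?addr0; first by rewrite !mxE eqxx.
by move=> l hl; rewrite !mxE eq_sym (negbTE hl).
Qed.

Lemma sum_mul1 (R : realType) N d (w : 'M[R]_(N, d)) i k :
  \sum_(l < N) (1%:M : 'M[R]_N) i l * w l k = w i k.
Proof. by have := mul1mx w; move/matrixP/(_ i k); rewrite mxE. Qed.

Lemma P_rowsum (R : realType) N (P0 : R -> 'M[R]_N) (Qf : R -> 'M[R]_N) (alpha K : R) :
  (forall (t : R) i l, `|Qf t i l| <= K) -> (forall (t : R) i, \sum_(l < N) Qf t i l = 0) ->
  P0 s @[s --> (0 : R)^'+] --> (1%:M : 'M[R]_N) ->
  (forall t : R, 0 < t -> is_derive t 1 P0 (alpha *: (Qf t *m P0 t))) ->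
  forall t : R, 0 < t -> forall i, \sum_(l < N) P0 t i l = 1.
Proof.
move=> hK hQ hP0 hder t tp i.
suff H : \sum_(l < N) P0 t i l - 1 = 0 by apply/eqP; rewrite -subr_eq0 H.
apply: (@ode_unique R N 1 (fun s i k => \sum_(l < N) P0 s i l - 1)
  (fun t i l => alpha * Qf t i l) (`|alpha| * K) _ _ _ t tp i ord0).
- by move=> s j l; rewrite normrM ler_wpM2l.
- move=> j k.
  have L1 : (\sum_(l < N) P0 s j l) @[s --> (0 : R)^'+] -->
      \sum_(l < N) (1%:M : 'M[R]_N) j l.
    apply: (cvg_big (op := +%R) (x0 := 0) (P := xpredT) add_continuous) => // l _.
    exact: entry_cvg.
  rewrite sum_row1 in L1.
  have := cvgB L1 (cvg_cst (1 : R)); rewrite subrr; exact.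
- move=> s sp j k.
  have H1 := is_derive_subc 1 (is_derive_sumf (fun l => is_derive_entry j l (hder s sp))).
  apply: is_derive_eq H1 _; rewrite /=.
  rewrite [RHS](eq_bigr (fun l => alpha * Qf s j l * \sum_(m < N) P0 s l m - alpha * Qf s j l));
    last by move=> l _; rewrite mulrBr mulr1.
  rewrite sumrB -mulr_sumr hQ mulr0 subr0.
  rewrite [LHS](eq_bigr (fun l => \sum_(m < N) alpha * Qf s j m * P0 s m l)); last first.
    by move=> l _; rewrite !mxE mulr_sumr; apply: eq_bigr => m _; rewrite mulrA.
  rewrite exchange_big /=; apply: eq_bigr => l _; by rewrite mulr_sumr.
Qed.

Lemma v_eq (R : realType) N d (P0 : R -> 'M[R]_N) (Qf : R -> 'M[R]_N)
  (v F : R -> 'M[R]_(N, d)) (alpha K : R) :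
  (forall (t : R) i l, `|Qf t i l| <= K) ->
  P0 s @[s --> (0 : R)^'+] --> (1%:M : 'M[R]_N) ->
  v s @[s --> (0 : R)^'+] --> v 0 ->
  (forall t : R, 0 < t -> is_derive t 1 P0 (alpha *: (Qf t *m P0 t))) ->
  (forall t : R, 0 < t -> is_derive t 1 v (F t)) ->
  (forall (t : R) i k, F t i k = alpha * \sum_(j < N) Qf t i j * v t j k) ->
  forall t : R, 0 < t -> v t = P0 t *m v 0.
Proof.
move=> hK hP0 hv0 hP hv hF t tp; apply/matrixP => i k.
suff H : v t i k - (P0 t *m v 0) i k = 0 by apply/eqP; rewrite -subr_eq0 H.
have E : forall j m, (fun s => (P0 s *m v 0) j m) =
    (fun s => \sum_(l < N) P0 s j l * v 0 l m).
  by move=> j m; apply/funext => s; rewrite mxE.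
apply: (@ode_unique R N d (fun s i k => v s i k - (P0 s *m v 0) i k)
  (fun t i l => alpha * Qf t i l) (`|alpha| * K) _ _ _ t tp i k).
- by move=> s j l; rewrite normrM ler_wpM2l.
- move=> j m.
  have L1 : (P0 s *m v 0) j m @[s --> (0 : R)^'+] --> v 0 j m.
    rewrite E -(sum_mul1 (v 0) j m).
    apply: (cvg_big (op := +%R) (x0 := 0) (P := xpredT) add_continuous) => // l _.
    apply: cvgM; last exact: cvg_cst.
    exact: entry_cvg.
  have L2 : v s j m @[s --> (0 : R)^'+] --> v 0 j m by apply: entry_cvg.
  have H3 : v s j m - (P0 s *m v 0) j m @[s --> (0 : R)^'+] --> v 0 j m - v 0 j m.
    by apply: cvgB.
  by rewrite subrr in H3.
- move=> s sp j m.
  have H1 : is_derive s 1 (fun s => (P0 s *m v 0) j m)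
      (\sum_(l < N) (alpha *: (Qf s *m P0 s)) j l * v 0 l m).
    rewrite (E j m); apply: is_derive_sumf => l; apply: is_derive_mulc.
    exact: is_derive_entry (hP s sp).
  have H2 := is_derive_subf (is_derive_entry j m (hv s sp)) H1.
  apply: is_derive_eq H2 _; rewrite /= hF.
  rewrite [RHS](eq_bigr (fun l => alpha * Qf s j l * v s l m -
      alpha * Qf s j l * (P0 s *m v 0) l m)); last by move=> l _; rewrite mulrBr.
  rewrite sumrB mulr_sumr; congr (_ - _).
    by apply: eq_bigr => l _; rewrite mulrA.
  rewrite [RHS](eq_bigr (fun n => \sum_(l < N) alpha * Qf s j n * P0 s n l * v 0 l m));
    last first.
    move=> n _; rewrite !mxE mulr_sumr; apply: eq_bigr => l _; by rewrite mulrA.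
  rewrite exchange_big /=; apply: eq_bigr => l _.
  rewrite !mxE mulr_sumr mulr_suml; apply: eq_bigr => n _; ring.
Qed.

Lemma ftc_bound (R : realType) N d (x v : R -> 'M[R]_(N, d)) (i j : 'I_N)
  (e : 'rV[R]_d) (g : R -> R) (t : R) :
  0 < t ->
  x s @[s --> (0 : R)^'+] --> x 0 -> v s @[s --> (0 : R)^'+] --> v 0 ->
  (forall s : R, 0 < s -> is_derive s 1 x (v s)) ->
  (forall s : R, 0 < s -> v r @[r --> s] --> v s) ->
  measurable_fun (`[0, t] : set R) g ->
  (forall s : R, 0 <= s <= t -> lf i j e (v s) <= g s) ->
  (forall s : R, 0 <= s <= t -> 0 <= g s) ->
  ((lf i j e (x t) - lf i j e (x 0))%:E <=
     \int[lebesgue_measure]_(s in (`[0%R, t]%classic : set R)) (g s)%:E)%E.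
Proof.
move=> tp hx0 hv0 hx hvc hg hfg hg0.
have cf : {within `[0, t], continuous (fun s => lf i j e (v s))}.
  apply/(continuous_within_itvP _ tp); split.
  - move=> s; rewrite in_itv /= => /andP [sp _].
    exact: lf_cvg (hvc s sp).
  - exact: lf_cvg hv0.
  - apply: cvg_at_left_filter; exact: lf_cvg (hvc t tp).
have FTC := @continuous_FTC2 R (fun s => lf i j e (v s)) (fun s => lf i j e (x s)) 0 t tp cf.
rewrite EFinB -FTC; last 2 first.
- split.
  + move=> s; rewrite in_itv /= => /andP [sp _].
    by have [] := lf_derive i j e (hx s sp).
  + exact: lf_cvg hx0.
  + apply: cvg_at_left_filter; exact: lf_cvg (derive_cont (hx t tp)).
- move=> s; rewrite in_itv /= => /andP [sp _].
  by rewrite derive1E (@derive_val _ _ _ _ _ _ _ (lf_derive i j e (hx s sp))).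
have mI : measurable (`[0, t] : set R) by [].
have intf : lebesgue_measure.-integrable `[0, t] (EFin \o (fun s => lf i j e (v s))).
  by apply: continuous_compact_integrable => //; exact: segment_compact.
rewrite integralE.
apply: le_trans (leeB (lexx _) (integral_ge0 _ _)) _.
  by move=> s _; exact: funeneg_ge0.
rewrite sube0.
apply: ge0_le_integral => //.
- by apply: measurable_realfun.measurable_funepos; exact: measurable_int intf.
- by apply/measurable_realfun.measurable_EFinP.
- move=> s; rewrite /= in_itv /= => /andP [s0 st].
  rewrite funeposE /= ge_max; apply/andP; split; rewrite lee_fin.
    by apply: hfg; rewrite s0 st.
  by apply: hg0; rewrite s0 st.
Qed.

Lemma near_right_ex (R : realType) (tau : R) (P : R -> Prop) :
  (\forall s \near tau^'+, P s) ->
  exists2 e : R, 0 < e & forall s, tau < s < tau + e -> P s.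
Proof.
move=> /nbhs_ballP [e ep He]; exists e => // s /andP [h1 h2].
apply: He => //=; rewrite -ball_normE /= distrC ger0_norm ?subr_ge0; lra.
Qed.

Lemma S_bounds (R : realType) N d (hN : (0 < N)%N) (x : R -> 'M[R]_(N, d)) (t r0 : R) :
  0 <= t -> (forall s, 0 <= s <= t -> diam (x s) <= r0) ->
  diam (x 0) <= sup [set diam (x s) | s in `[0, t]] /\
  sup [set diam (x s) | s in `[0, t]] <= r0.
Proof.
move=> t0 hb.
have ne : [set diam (x s) | s in `[0, t]] !=set0.
  by exists (diam (x 0)); exists 0 => //=; rewrite in_itv /= lexx t0.
have ub : ubound [set diam (x s) | s in `[0, t]] r0.
  by move=> z [s]; rewrite /= in_itv /= => hs <-; exact: hb.
split; last exact: ge_sup.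
apply: sup_upper_bound; first by split => //; exists r0.
by exists 0 => //=; rewrite in_itv /= lexx t0.
Qed.

Unset Implicit Arguments.

Theorem proposition4p3 (R : realType) (N d : nat) (hN : (0 < N)%N) (hd : (0 < d)%N)
  (alpha : R) (halpha : 0 < alpha)
  (Psi : 'I_N -> 'I_N -> 'M[R]_(N, d) -> 'M[R]_(N, d) -> R)
  (hPsi_nn : forall i j, i != j -> forall x v, 0 <= Psi i j x v)
  (hPsi_bd : forall i j, i != j -> exists M : R, forall x v, Psi i j x v <= M)
  (hPsi_lip : forall i j, i != j -> locally_lipschitz2 (Psi i j))
  (x v : R -> 'M[R]_(N, d))
  (hx0 : x s @[s --> 0^'+] --> x 0)
  (hv0 : v s @[s --> 0^'+] --> v 0)
  (hx : forall t : R, 0 < t -> is_derive t 1 x (v t))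
  (hv : forall t : R, 0 < t ->
        is_derive t 1 v (align_force alpha (Qmat Psi (x t) (v t)) (v t)))
  (P : R -> R -> 'M[R]_N)
  (hPtt : forall t : R, 0 <= t -> P t t = 1%:M)
  (hPt : forall s t : R, 0 <= s < t ->
         is_derive t 1 (P s) (alpha *: (Qmat Psi (x t) (v t) *m P s t)))
  (hPt0 : forall s : R, 0 <= s -> P s u @[u --> s^'+] --> P s s)
  (hPs : forall s t : R, 0 < s < t ->
         is_derive s 1 (fun u => P u t) (- alpha *: (P s t *m Qmat Psi (x s) (v s))))
  (C : R -> R -> R)
  (hC_nn : forall t r : R, 0 <= t -> 0 <= r -> 0 <= C t r)
  (hCa : forall t : R, 0 <= t ->
         {in `[0, +oo[ &, {homo C t : r1 r2 / r1 <= r2}})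
  (hCb : forall r : R, diam (x 0) <= r -> C t r @[t --> +oo] --> 0)
  (hCc : forall t : R, 0 <= t ->
         1 - dobrushin (P 0 t) <= C t (sup [set diam (x s) | s in `[0, t]]))
  (hr0 : exists r0 : R, diam (x 0) <= r0 /\
         measurable_fun (`[0, +oo[ : set R) (fun s => C s r0) /\
         ((diam (v 0))%:E * \int[lebesgue_measure]_(s in (`[0%R, +oo[%classic : set R)) (C s r0)%:E
            < (r0 - diam (x 0))%:E)%E) :
  (exists M : R, forall t : R, 0 <= t -> diam (x t) <= M) /\
  diam (v t) @[t --> +oo] --> 0.
Proof.
have [K hK] := Q_bound hPsi_nn hPsi_bd.
pose Qf t := Qmat Psi (x t) (v t).
have hQ : forall (t : R) i l, `|Qf t i l| <= K by move=> t; exact: hK.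
have hQr : forall (t : R) i, \sum_(l < N) Qf t i l = 0 by move=> t i; exact: Q_rowsum.
have hP0 : P 0 s @[s --> (0 : R)^'+] --> (1%:M : 'M[R]_N).
  by have := hPt0 0 (lexx 0); rewrite hPtt.
have hPd : forall t : R, 0 < t -> is_derive t 1 (P 0) (alpha *: (Qf t *m P 0 t)).
  by move=> t tp; apply: hPt; rewrite lexx tp.
have rows : forall t : R, 0 <= t -> forall i, \sum_(l < N) P 0 t i l = 1.
  move=> t; rewrite le_eqVlt => /orP [/eqP <- | tp] i.
    by rewrite hPtt // sum_row1.
  exact: (P_rowsum hQ hQr hP0 hPd tp).
have veq : forall t : R, 0 <= t -> v t = P 0 t *m v 0.
  move=> t; rewrite le_eqVlt => /orP [/eqP <- | tp].
    by rewrite hPtt // mul1mx.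
  have := @v_eq R N d (P 0) Qf v (fun t => align_force alpha (Qf t) (v t)) alpha K hQ hP0.
  move=> /(_ hv0) /(_ hPd) /(_ hv) H; apply: H => //.
  by move=> s i k; rewrite align_eq.
have X0 : 0 <= diam (x 0) by exact: diam_ge0.
have V0 : 0 <= diam (v 0) by exact: diam_ge0.
have Vb : forall t : R, 0 <= t -> diam (v t) <= (1 - dobrushin (P 0 t)) * diam (v 0).
  move=> t t0; apply: diam_le => // i j; rewrite (veq t t0).
  apply: le_trans (vel_bound i j (rows t t0) (fun k l => diam_ub (v 0) k l)) _.
  apply: ler_wpM2r => //; have := dob_lb (P 0 t) i j; lra.
have [r0 [hr0X [hmeas hint]]] := hr0.
have r00 : 0 <= r0 by apply: le_trans hr0X.
have Cb : forall t : R, 0 <= t -> (forall s, 0 <= s <= t -> diam (x s) <= r0) ->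
    diam (v t) <= C t r0 * diam (v 0).
  move=> t t0 hb; have [S1 S2] := S_bounds hN t0 hb.
  apply: le_trans (Vb t t0) _; apply: ler_wpM2r => //.
  apply: le_trans (hCc t t0) _; apply: (hCa t t0).
  - by rewrite ?inE /= ?in_itv /= ?andbT; exact: le_trans S1.
  - by rewrite ?inE /= ?in_itv /= ?andbT.
  - exact: S2.
set I := (\int[lebesgue_measure]_(s in (`[0%R, +oo[%classic : set R)) (C s r0)%:E)%E.
have I0 : (0 <= I)%E.
  apply: integral_ge0 => s; rewrite /= in_itv /= andbT => s0.
  by rewrite lee_fin hC_nn.
set beta := ((diam (v 0))%:E * I)%E.
have beta0 : (0 <= beta)%E by apply: mule_ge0; rewrite ?lee_fin.
have betafin : beta \is a fin_num by rewrite ge0_fin_numE // (lt_trans hint) // ltry.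
set b := fine beta.
have hb : b%:E = beta by rewrite fineK.
have b0 : 0 <= b by rewrite -lee_fin hb.
have bl : b < r0 - diam (x 0) by rewrite -lte_fin hb.
have hvc : forall s : R, 0 < s -> v r @[r --> s] --> v s.
  by move=> s sp; exact: derive_cont (hv s sp).
have key : forall t' : R, 0 < t' -> (forall s, 0 <= s <= t' -> diam (x s) <= r0) ->
    forall i j, enorm (row i (x t') - row j (x t')) <= diam (x 0) + b.
  move=> t' tp hb' i j.
  have [e [e1 de]] := enorm_dir (row i (x t') - row j (x t')).
  have sub : (`[0, t'] : set R) `<=` `[0, +oo[.
    by move=> s; rewrite /= !in_itv /= => /andP [-> _].
  have mC : measurable_fun (`[0, t'] : set R) (fun s => C s r0).
    exact: measurable_funS hmeas.
  have mg : measurable_fun (`[0, t'] : set R) (fun s => diam (v 0) * C s r0).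
    by apply: measurable_realfun.measurable_funM => //; exact: measurable_cst.
  have H := ftc_bound (i := i) (j := j) (e := e) tp hx0 hv0 hx hvc mg.
  have H1 : ((lf i j e (x t') - lf i j e (x 0))%:E <=
      \int[lebesgue_measure]_(s in (`[0%R, t']%classic : set R)) (diam (v 0) * C s r0)%:E)%E.
    apply: H.
    - move=> s /andP [s0 st]; rewrite lfE; apply: le_trans (CS _ _) _.
      apply: le_trans (_ : enorm (row i (v s) - row j (v s)) <= _).
        by rewrite -{2}(mulr1 (enorm _)) ler_wpM2l // enorm_ge0.
      apply: le_trans (diam_ub (v s) i j) _; rewrite mulrC.
      apply: Cb => // s' /andP [s'0 s's]; apply: hb'.
      by rewrite s'0 (le_trans s's st).
    - by move=> s /andP [s0 st]; apply: mulr_ge0 => //; exact: hC_nn.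
  have H2 : (\int[lebesgue_measure]_(s in (`[0%R, t']%classic : set R))
      (diam (v 0) * C s r0)%:E <= beta)%E.
    under eq_integral => s _ do rewrite EFinM.
    rewrite ge0_integralZl //; last first.
    - by move=> s; rewrite /= in_itv /= => /andP [s0 _]; rewrite lee_fin hC_nn.
    - by apply/measurable_realfun.measurable_EFinP.
    apply: lee_wpmul2l; first by rewrite lee_fin.
    apply: ge0_subset_integral => //.
    - by apply/measurable_realfun.measurable_EFinP.
    - by move=> s; rewrite /= in_itv /= andbT => s0; rewrite lee_fin hC_nn.
  have H3 := le_trans H1 H2; rewrite -hb lee_fin in H3.
  have -> : enorm (row i (x t') - row j (x t')) = lf i j e (x t') by rewrite lfE.
  have : lf i j e (x 0) <= diam (x 0).
    rewrite lfE; apply: le_trans (CS _ _) _.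
    apply: le_trans (_ : enorm (row i (x 0) - row j (x 0)) <= _).
      by rewrite -{2}(mulr1 (enorm _)) ler_wpM2l // enorm_ge0.
    exact: diam_ub.
  lra.
pose g (i j : 'I_N) (t : R) := enorm (row i (x t) - row j (x t)).
have cont0 : forall i j, g i j s @[s --> (0 : R)^'+] --> g i j 0.
  by move=> i j; exact: enorm_cvg hx0.
have contt : forall t : R, 0 < t -> forall i j, g i j s @[s --> t] --> g i j t.
  by move=> t tp i j; exact: enorm_cvg (derive_cont (hx t tp)).
set c1 := diam (x 0) + b.
have c1r0 : c1 < r0 by rewrite /c1; lra.
have g0 : forall i j, g i j 0 <= c1.
  by move=> i j; apply: le_trans (diam_ub (x 0) i j) _; rewrite /c1; lra.
have G : forall t : R, 0 <= t -> forall i j, g i j t < r0.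
  move=> t0 t0ge i0 j0; rewrite ltNge; apply/negP => bad.
  pose B := [set t : R | 0 <= t /\ exists i j, r0 <= g i j t].
  have Bt0 : B t0 by split => //; exists i0, j0.
  have Blb : lbound B 0 by move=> s [].
  have hB : has_inf B by split; [exists t0 | exists 0].
  pose tau := inf B.
  have tau0 : 0 <= tau by apply: lb_le_inf => //; exists t0.
  have tauB : forall s, B s -> tau <= s by move=> s Bs; exact: (ge_inf hB.2 Bs).
  have P1 : forall s, 0 <= s -> s < tau -> forall i j, g i j s < r0.
    move=> s s0 st i j; rewrite ltNge; apply/negP => h.
    have := tauB s (conj s0 (ex_intro _ i (ex_intro _ j h))).
    by rewrite leNgt st.
  have P1' : forall s, 0 <= s -> s < tau -> diam (x s) <= r0.
    by move=> s s0 st; apply: diam_le => // i j; exact: ltW (P1 s s0 st i j).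
  have P2 : forall s, 0 <= s -> s < tau -> forall i j, g i j s <= c1.
    move=> s s0 st i j; have [->|sn0] := eqVneq s 0; first exact: g0.
    have sp : 0 < s by rewrite lt_def sn0 s0.
    apply: key sp _ i j => s' /andP [s'0 s's].
    exact: P1' s'0 (le_lt_trans s's st).
  have P3 : forall i j, g i j tau <= c1.
    move=> i j; have [et|tn0] := eqVneq tau 0; first by rewrite et; exact: g0.
    have tp : 0 < tau by rewrite lt_def tn0 tau0.
    rewrite leNgt; apply/negP => h.
    have L : g i j s @[s --> tau^'-] --> g i j tau.
      by apply: cvg_at_left_filter; exact: contt.
    have H : \forall s \near tau^'-, c1 < g i j s /\ 0 < s /\ s < tau.
      near=> s; split; last split.
      - near: s; exact: (cvgr_gt _ L _ h).
      - near: s; exact: nbhs_left_gt.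
      - near: s; exact: nbhs_left_lt.
    have [s /= [h1 [h2 h3]]] := @filter_ex R (tau^'-) _ _ H.
    have := P2 s (ltW h2) h3 i j; lra.
  have P4 : \forall s \near tau^'+, forall p : 'I_N * 'I_N, g p.1 p.2 s < r0.
    apply: filter_forall => p.
    have L : g p.1 p.2 s @[s --> tau^'+] --> g p.1 p.2 tau.
      have [et|tn0] := eqVneq tau 0; first by rewrite et; exact: cont0.
      have tp : 0 < tau by rewrite lt_def tn0 tau0.
      by apply: cvg_at_right_filter; exact: contt.
    exact: (cvgr_lt _ L _ (le_lt_trans (P3 _ _) c1r0)).
  have [e ep He] := near_right_ex P4.
  have [bb Bbb bbl] := inf_adherent ep hB.
  have taub := tauB bb Bbb.
  case: Bbb => bb0 [i [j hij]].
  have [ebt|nbt] := eqVneq bb tau.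
    by have := P3 i j; rewrite -ebt; lra.
  have tb : tau < bb by rewrite lt_def nbt taub.
  have := He bb _ (i, j); rewrite /= tb bbl => /(_ isT); lra.
split.
  exists r0 => t t0; apply: diam_le => // i j; exact: ltW (G t t0 i j).
have Cb' : forall t : R, 0 <= t -> diam (v t) <= C t r0 * diam (v 0).
  move=> t t0; apply: Cb t0 _ => s /andP [s0 _].
  by apply: diam_le => // i j; exact: ltW (G s s0 i j).
have hC0 : C t r0 * diam (v 0) @[t --> +oo] --> 0.
  have := cvgM (hCb r0 hr0X) (cvg_cst (diam (v 0))); rewrite mul0r; exact.
apply: (squeeze_cvgr _ (cvg_cst 0) hC0).
near=> t.
have t0 : 0 <= t by near: t; apply: nbhs_pinfty_ge; rewrite num_real.
by rewrite diam_ge0 //= Cb'.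
Unshelve. all: by end_near.
Qed.
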